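(* Let $G=(\mathbb Z/a_1\mathbb Z)\times\dots\times(\mathbb Z/a_r\mathbb Z)$ be a finite Abelian group, let $f,g:G\to\mathbb C$ and let $n\ge 1$. Then $M_n(f;x_1,\dots,x_{n-1})=M_n(g;x_1,\dots,x_{n-1})$ for all $x_1,\dots,x_{n-1}\in G$ if and only if $\widehat f(x_1)\cdots\widehat f(x_n)=\widehat g(x_1)\cdots\widehat g(x_n)$ for all $x_1,\dots,x_n\in G$ with $x_1+\dots+x_n=0$.
   Context: Elements of $G$ are tuples $x=(x[1],\dots,x[r])$ with componentwise addition modulo $a_k$. Define $\chi(x,y)=\exp\left(2\pi i\sum_{k=1}^r \frac{x[k]y[k]}{a_k}\right)$. The discrete Fourier transform of $f$ is $\widehat f(x)=\sum_{y\in G}f(y)\overline{\chi(x,y)}$. The $n$-th autocorrelation is $M_n(f;x_1,\dots,x_{n-1})=\sum_{y\in G}f(y)f(y+x_1)\cdots f(y+x_{n-1})$. *)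

(* Defs.v *)
From HB Require Import structures.
From mathcomp Require Import all_boot all_order all_algebra.
From mathcomp Require Import complex.
From mathcomp Require Import reals trigo.
Set Implicit Arguments. Unset Strict Implicit. Unset Printing Implicit Defensive.
Import Order.TTheory GRing.Theory Num.Theory.
Local Open Scope ring_scope.
Local Open Scope complex_scope.

(* The group G = Z/a_1 x ... x Z/a_r : tuples x with x[k] in {0,..,a_k - 1}. *)
Definition Gab (r : nat) (a : 'I_r -> nat) : finType :=
  {dffun forall k : 'I_r, 'I_(a k)}.

Lemma ord_pos' (m : nat) (i : 'I_m) : (0 < m)%N.
Proof. exact: leq_ltn_trans (leq0n i) (ltn_ord i). Qed.

Definition addI (m : nat) (i j : 'I_m) : 'I_m :=
  Ordinal (ltn_pmod (i + j)%N (ord_pos' i)).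

Definition addG r (a : 'I_r -> nat) (x y : Gab a) : Gab a :=
  finfun (fun k => addI (x k) (y k)) : {dffun forall k : 'I_r, 'I_(a k)}.

Definition e2pi (R : realType) (t : R) : R[i] :=
  (cos (2 * pi * t) +i* sin (2 * pi * t))%C.

Definition chi (R : realType) r (a : 'I_r -> nat) (x y : Gab a) : R[i] :=
  e2pi (\sum_(k < r) ((nat_of_ord (x k) * nat_of_ord (y k))%:R / (a k)%:R : R)).

Definition dft (R : realType) r (a : 'I_r -> nat) (f : Gab a -> R[i]) (x : Gab a)
  : R[i] := \sum_(y : Gab a) f y * (@chi R r a x y)^*.

(* n-th autocorrelation M_n(f; x_1,...,x_{n-1}) = sum_y f(y) f(y+x_1)...f(y+x_{n-1});
   xs i stands for x_{i+1}, i < n-1 *)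
Definition autocorr (R : realType) r (a : 'I_r -> nat) (n : nat)
  (f : Gab a -> R[i]) (xs : 'I_n.-1 -> Gab a) : R[i] :=
  \sum_(y : Gab a) f y * \prod_(i < n.-1) f (addG y (xs i)).

(* Main.v *)
Require Import Defs.
From HB Require Import structures.
From mathcomp Require Import all_boot all_order all_algebra.
From mathcomp Require Import complex.
From mathcomp Require Import reals trigo.
From mathcomp Require Import ring lra zify.
Import Order.TTheory GRing.Theory Num.Theory.
Local Open Scope ring_scope.
Set Implicit Arguments. Unset Strict Implicit. Unset Printing Implicit Defensive.

Section S.
Variable R : realType.

Lemma mulC' (x y z w : R) : (Complex x y) * (Complex z w) = Complex (x*z - y*w) (x*w + y*z).
Proof. by []. Qed.

Lemma conjC' (x y : R) : Num.conj (Complex x y) = Complex x (- y).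
Proof. by []. Qed.

Lemma e2piD (s t : R) : e2pi (s + t) = e2pi s * e2pi t.
Proof. by rewrite /e2pi mulC' mulrDr cosD sinD; congr Complex; ring. Qed.

Lemma e2pi0 : e2pi (0 : R) = 1.
Proof. by rewrite /e2pi mulr0 cos0 sin0. Qed.

Lemma e2pi_nat m : e2pi (m%:R : R) = 1.
Proof.
elim: m => [|m IH]; first exact: e2pi0.
rewrite -addn1 natrD e2piD IH mul1r /e2pi mulr1 mulr_natl cos2pi sin2pi //.
Qed.

Lemma e2pi_neq1 (t : R) : 0 < t < 1 -> e2pi t != 1.
Proof.
move=> /andP[t0 t1]; apply/eqP; rewrite /e2pi => -[].
have -> : 2 * pi * t = (pi * t) *+ 2 by rewrite mulr_natl -mulrnAl.
rewrite cos_mulr2n => h _.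
have hs : 0 < sin (pi * t).
  apply: sin_gt0_pi; rewrite mulr_gt0 ?pi_gt0 //= -[ltRHS]mulr1 ltr_pM2l ?pi_gt0 //.
have := sin2cos2 (pi * t).
have -> : cos (pi * t) ^+ 2 = 1 by move: h; lra.
rewrite subrr => /eqP; rewrite sqrf_eq0 => /eqP h0.
by move: hs; rewrite h0 ltxx.
Qed.

Lemma conj_e2pi (t : R) : Num.conj (e2pi t) * e2pi t = 1.
Proof. rewrite /e2pi conjC' mulC'. congr Complex.
 - by rewrite mulNr opprK -!expr2 cos2Dsin2.
 - ring.
Qed.

Variables (r : nat) (a : 'I_r -> nat) (ha : forall k, (0 < a k)%N).
Local Notation G := (Gab a).
Local Notation ch := (@chi R r a).

Definition zeroG : G := finfun (fun k => Ordinal (ha k)).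
Definition negG (x : G) : G := finfun (fun k => Ordinal (ltn_pmod (a k - x k) (ha k))).

Lemma GP (x y : G) : (forall k, nat_of_ord (x k) = nat_of_ord (y k)) -> x = y.
Proof. by move=> h; apply/ffunP => k; apply/val_inj; exact: h. Qed.

Lemma addGE (x y : G) k : nat_of_ord (addG x y k) = ((x k + y k) %% a k)%N.
Proof. by rewrite /addG ffunE. Qed.
Lemma zeroGE k : nat_of_ord (zeroG k) = 0%N.
Proof. by rewrite /zeroG ffunE. Qed.
Lemma negGE (x : G) k : nat_of_ord (negG x k) = ((a k - x k) %% a k)%N.
Proof. by rewrite /negG ffunE. Qed.

Lemma addGC (x y : G) : addG x y = addG y x.
Proof. by apply: GP => k; rewrite !addGE addnC. Qed.
Lemma addGA (x y z : G) : addG x (addG y z) = addG (addG x y) z.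
Proof. by apply: GP => k; rewrite !addGE modnDmr modnDml addnA. Qed.
Lemma add0G (x : G) : addG zeroG x = x.
Proof. by apply: GP => k; rewrite addGE zeroGE add0n modn_small. Qed.
Lemma addNG (x : G) : addG (negG x) x = zeroG.
Proof.
apply: GP => k; rewrite addGE negGE zeroGE modnDml subnK ?modnn //.
exact: ltnW.
Qed.
Lemma addKG (z x : G) : addG (negG z) (addG z x) = x.
Proof. by rewrite addGA addNG add0G. Qed.

Lemma sum_transl (F : G -> R[i]) (z : G) : \sum_y F (addG z y) = \sum_y F y.
Proof.
have inj : injective (addG z).
  by move=> x y /(congr1 (addG (negG z))); rewrite !addKG.
by rewrite [RHS](reindex_inj inj).
Qed.

Lemma chiE (x y : G) : ch x y = \prod_k e2pi ((nat_of_ord (x k) * nat_of_ord (y k))%:R / (a k)%:R).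
Proof. by rewrite /chi (big_morph _ (@e2piD) (@e2pi0)). Qed.

Lemma chiC (x y : G) : ch x y = ch y x.
Proof. by rewrite !chiE; apply: eq_bigr => k _; rewrite mulnC. Qed.

Lemma chiD (x y z : G) : ch x (addG y z) = ch x y * ch x z.
Proof.
rewrite !chiE -big_split /=; apply: eq_bigr => k _; rewrite addGE.
set X := nat_of_ord (x k); set Y := nat_of_ord (y k); set Z := nat_of_ord (z k).
rewrite -e2piD.
have hA : ((a k)%:R : R) != 0 by rewrite pnatr_eq0 -lt0n ha.
have -> : (X * Y)%:R / (a k)%:R + (X * Z)%:R / (a k)%:R =
   (X * ((Y + Z) %% a k))%:R / (a k)%:R + (X * ((Y + Z) %/ a k))%:R :> R.
  rewrite -mulrDl -natrD.
  have -> : (X * Y + X * Z = X * ((Y + Z) %% a k) + X * ((Y + Z) %/ a k) * a k)%N.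
    by rewrite -mulnDr {1}(divn_eq (Y + Z) (a k)) mulnDr addnC mulnA.
  by rewrite natrD mulrDl; congr (_ + _); rewrite [in LHS]natrM mulfK.
by rewrite e2piD e2pi_nat mulr1.
Qed.

Lemma chi0r (x : G) : ch x zeroG = 1.
Proof. by rewrite chiE big1 // => k _; rewrite zeroGE muln0 mul0r e2pi0. Qed.
Lemma chi0l (x : G) : ch zeroG x = 1.
Proof. by rewrite chiC chi0r. Qed.

Lemma conj_chi (x y : G) : Num.conj (ch x y) * ch x y = 1.
Proof.
rewrite chiE rmorph_prod -big_split /=; apply: big1 => k _; exact: conj_e2pi.
Qed.

Lemma card_G_gt0 : (0 < #|G|)%N.
Proof. by apply/card_gt0P; exists zeroG. Qed.

Lemma ortho (y : G) : \sum_x ch x y = if y == zeroG then (#|G|%:R : R[i]) else 0.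
Proof.
case: eqP => [->|hy].
  by rewrite (eq_bigr (fun _ => 1)) ?sumr_const // => x _; rewrite chi0r.
case: (pickP (fun k => nat_of_ord (y k) != 0%N)) => [k hk|h]; last first.
  by exfalso; apply: hy; apply: GP => k; rewrite zeroGE; move: (h k) => /negbFE/eqP.
set e : G := finfun (fun j => Ordinal (ltn_pmod (j == k) (ha j))).
have hak : (1 < a k)%N by have := ltn_ord (y k); move: hk; lia.
have he : ch y e = e2pi ((nat_of_ord (y k))%:R / (a k)%:R).
  rewrite chiE (bigD1 k) //= big1 ?mulr1.
    by rewrite /e ffunE /= eqxx modn_small // muln1.
  move=> j hj; rewrite /e ffunE /= (negbTE hj) mod0n muln0 mul0r; exact: e2pi0.
have hne : ch y e != 1.
  rewrite he; apply: e2pi_neq1; apply/andP; split.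
    rewrite divr_gt0 ?ltr0n ?ha //; by rewrite lt0n.
  by rewrite ltr_pdivrMr ?ltr0n ?ha // mul1r ltr_nat.
set S := \sum_x ch x y.
have hS : S = ch y e * S.
  rewrite {1}/S -(sum_transl (fun x => ch x y) e) /S mulr_sumr; apply: eq_bigr => x _.
  by rewrite chiC chiD [ch y x]chiC.
apply/eqP; move/eqP: hS; rewrite -subr_eq0 -{1}(mul1r S) -mulrBl mulf_eq0 subr_eq0.
by rewrite eq_sym (negbTE hne).
Qed.

Definition sumG m (u : 'I_m -> G) : G := \big[@addG r a/zeroG]_(i < m) u i.

Lemma sumGE m (u : 'I_m -> G) k : nat_of_ord (sumG u k) = ((\sum_(i < m) nat_of_ord (u i k)) %% a k)%N.
Proof.
elim: m u => [|m IH] u; first by rewrite /sumG !big_ord0 zeroGE mod0n.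
by rewrite /sumG !big_ord_recl addGE -/(sumG _) IH modnDmr.
Qed.

Lemma prod_chi m (u : 'I_m -> G) y : \prod_(i < m) ch (u i) y = ch (sumG u) y.
Proof.
elim: m u => [|m IH] u; first by rewrite /sumG !big_ord0 chi0l.
by rewrite /sumG !big_ord_recl -/(sumG _) IH [RHS]chiC chiD; congr (_ * _); apply: chiC.
Qed.

Lemma conj_uniq (c d : R[i]) : Num.conj c * c = 1 -> c * d = 1 -> d = Num.conj c.
Proof. by move=> h1 h2; rewrite -[d]mul1r -h1 -mulrA h2 mulr1. Qed.

Lemma chi_neg s y : ch s y = Num.conj (ch (negG s) y).
Proof.
apply: conj_uniq; first exact: conj_chi.
by rewrite chiC [ch s y]chiC -chiD addNG chi0r.
Qed.

Lemma inner (f : G -> R[i]) (w y : G) :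
  \sum_z f (addG y z) * Num.conj (ch w z) = ch w y * dft f w.
Proof.
rewrite /dft -[in RHS](sum_transl (fun z => f z * Num.conj (ch w z)) y) mulr_sumr; apply: eq_bigr => z _.
rewrite chiD rmorphM /= -[LHS]mulr1 -(conj_chi w y); ring.
Qed.

Definition FT m (F : {ffun 'I_m -> G} -> R[i]) (u : {ffun 'I_m -> G}) : R[i] :=
  \sum_(x : {ffun 'I_m -> G}) F x * \prod_(i < m) Num.conj (ch (u i) (x i)).

Lemma FT_auto m (f : G -> R[i]) (u : {ffun 'I_m -> G}) :
  FT (fun x => @autocorr R r a m.+1 f x) u = (\prod_i dft f (u i)) * dft f (negG (sumG u)).
Proof.
rewrite /FT /autocorr.
under [LHS]eq_bigr => x _ do rewrite mulr_suml.
rewrite exchange_big /=.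
transitivity (\sum_y f y * \prod_(i < m) (ch (u i) y * dft f (u i))).
  apply: eq_bigr => y _.
  under [in RHS]eq_bigr => i _ do rewrite -inner.
  rewrite bigA_distr_bigA mulr_sumr; apply: eq_bigr => x _.
  by rewrite -mulrA -big_split.
rewrite (eq_bigr (fun y => f y * \prod_i ch (u i) y * \prod_i dft f (u i))); last first.
  by move=> y _; rewrite big_split mulrA.
rewrite -mulr_suml mulrC; congr (_ * _).
by rewrite /dft; apply: eq_bigr => y _; rewrite prod_chi chi_neg.
Qed.

Lemma addG0 (x : G) : addG x zeroG = x.
Proof. by rewrite addGC add0G. Qed.

Lemma ortho2 (x z : G) :
  \sum_v Num.conj (ch v x) * ch v z = if z == x then (#|G|%:R : R[i]) else 0.
Proof.
have hz : z = addG (addG z (negG x)) x by rewrite -addGA addNG addG0.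
have -> : (z == x) = (addG z (negG x) == zeroG).
  apply/eqP/eqP => [->|h]; first by rewrite addGC addNG.
  by rewrite hz h add0G.
rewrite -ortho; apply: eq_bigr => v _.
have := chiD v (addG z (negG x)) x; rewrite -hz => ->.
by rewrite mulrCA conj_chi mulr1.
Qed.

Lemma FT_inv m (F : {ffun 'I_m -> G} -> R[i]) (z : {ffun 'I_m -> G}) :
  \sum_u FT F u * \prod_i ch (u i) (z i) = (#|G|%:R ^+ m) * F z.
Proof.
have key : forall x : {ffun 'I_m -> G},
  \sum_(u : {ffun 'I_m -> G}) (\prod_i Num.conj (ch (u i) (x i))) * \prod_i ch (u i) (z i)
   = \prod_i (if z i == x i then (#|G|%:R : R[i]) else 0).
  move=> x; under [in RHS]eq_bigr => i _ do rewrite -ortho2.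
  by rewrite bigA_distr_bigA; apply: eq_bigr => u _; rewrite big_split.
rewrite /FT.
under eq_bigr => u _ do rewrite mulr_suml.
rewrite exchange_big /=.
under eq_bigr => x _ do (under eq_bigr => u _ do rewrite -mulrA; rewrite -mulr_sumr key).
rewrite (bigD1 z) //= [X in _ + X]big1 ?addr0; last first.
  move=> x hx.
  case: (pickP (fun i => z i != x i)) => [i hi|h]; last first.
    by exfalso; move/negP: hx; apply; apply/eqP/ffunP => i; move: (h i) => /negbFE/eqP.
  by rewrite (bigD1 i) //= (negbTE hi) mul0r mulr0.
rewrite mulrC; congr (_ * _).
by rewrite (eq_bigr (fun _ => #|G|%:R)) ?prodr_const ?card_ord // => i _; rewrite eqxx.
Qed.
End S.

Lemma modlemma (A s x : nat) : (s < A)%N -> (x < A)%N -> ((s + x) %% A = 0)%N -> x = ((A - s) %% A)%N.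
Proof.
move=> hs hx h.
have e := divn_eq (s + x) A; rewrite h addn0 in e.
case: (posnP s) => [s0|s0].
  subst s; rewrite subn0 modnn; move: h; rewrite add0n modn_small //.
rewrite modn_small; last by lia.
set q := ((s + x) %/ A)%N in e.
case: q e => [|[|q]] e; lia.
Qed.

Theorem corollary1 (R : realType) (r : nat) (a : 'I_r -> nat)
  (ha : forall k, (0 < a k)%N) (f g : Gab a -> R[i]) (n : nat) (hn : (1 <= n)%N) :
  (forall xs : 'I_n.-1 -> Gab a, autocorr f xs = autocorr g xs) <->
  (forall xs : 'I_n -> Gab a,
     (forall k : 'I_r, (\sum_(j < n) nat_of_ord (xs j k)) %% a k = 0)%N ->
     \prod_(j < n) dft f (xs j) = \prod_(j < n) dft g (xs j)).
Proof.
case: n hn => // m _.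
set M := (fun (h : Gab a -> R[i]) (x : {ffun 'I_m -> Gab a}) => @autocorr R r a m.+1 h x).
split.
- move=> H xs hxs.
  set u : {ffun 'I_m -> Gab a} := [ffun i => xs (widen_ord (leqnSn m) i)].
  have hl : xs ord_max = negG ha (sumG ha u).
    apply: GP => k; rewrite negGE sumGE.
    move: (hxs k); rewrite big_ord_recr /=.
    have -> : \sum_(i < m) nat_of_ord (xs (widen_ord (leqnSn m) i) k) = \sum_(i < m) nat_of_ord (u i k).
      by apply: eq_bigr => i _; rewrite ffunE.
    rewrite -modnDml => h; apply: (modlemma _ _ h); [exact: ltn_pmod | exact: ltn_ord].
  have p : forall h : Gab a -> R[i], \prod_(j < m.+1) dft h (xs j) = \prod_i dft h (u i) * dft h (negG ha (sumG ha u)).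
    move=> h; rewrite big_ord_recr hl; congr (_ * _).
    by apply: eq_bigr => i _; rewrite ffunE.
  rewrite !p -!FT_auto /FT; apply: eq_bigr => x _; by rewrite H.
- move=> H xs.
  have hFT : forall u, FT (M f) u = FT (M g) u.
    move=> u; rewrite !FT_auto.
    pose xs' : 'I_m.+1 -> Gab a := fun j => if unlift ord_max j is Some i then u i else negG ha (sumG ha u).
    have e1 : forall i, xs' (widen_ord (leqnSn m) i) = u i.
      move=> i.
      have -> : widen_ord (leqnSn m) i = lift ord_max i by apply/val_inj; rewrite /= /bump leqNgt ltn_ord.
      by rewrite /xs' liftK.
    have e2 : xs' ord_max = negG ha (sumG ha u) by rewrite /xs' unlift_none.
    have p : forall h : Gab a -> R[i], \prod_(j < m.+1) dft h (xs' j) = \prod_i dft h (u i) * dft h (negG ha (sumG ha u)).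
      move=> h; rewrite big_ord_recr e2; congr (_ * _).
      by apply: eq_bigr => i _; rewrite e1.
    rewrite -!p; apply: H => k.
    rewrite big_ord_recr e2 /=.
    under eq_bigr => i _ do rewrite e1.
    rewrite negGE sumGE modnDmr -modnDml subnKC ?modnn //.
    exact: ltnW (ltn_pmod _ (ha k)).
  have inv := FT_inv ha (M f) (finfun xs).
  have inv' := FT_inv ha (M g) (finfun xs).
  have hc : (#|Gab a|%:R ^+ m : R[i]) != 0 by rewrite expf_neq0 // pnatr_eq0 -lt0n card_G_gt0.
  have : #|Gab a|%:R ^+ m * M f (finfun xs) = #|Gab a|%:R ^+ m * M g (finfun xs).
    by rewrite -inv -inv'; apply: eq_bigr => u _; rewrite hFT.
  move/(mulfI hc); rewrite /M /autocorr => E.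
  have F : forall h : Gab a -> R[i], \sum_y h y * \prod_(i < m) h (addG y (finfun xs i)) = \sum_y h y * \prod_(i < m) h (addG y (xs i)).
    by move=> h; apply: eq_bigr => y _; congr (_ * _); apply: eq_bigr => i _; rewrite ffunE.
  by rewrite -!F.
Qed.
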